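(* Let $p,q$ be distinct odd primes with $p\equiv 1\pmod 4$, $q\equiv 3\pmod 4$ and $\gcd(p-1,q-1)=2$, having a common primitive root $g$. With the Gauss periods $\eta_0,\eta_1,\delta_0^{p},\delta_1^{p},\delta_0^{q},\delta_1^{q}$ defined in the context, $$\eta_0^{2}\left(\delta_1^{p}\delta_1^{q}+\delta_0^{p}\delta_0^{q}\right)+\eta_1^{2}\left(\delta_1^{p}\delta_0^{q}+\delta_0^{p}\delta_1^{q}\right)=\frac{1-pq}{4}+\epsilon\,\frac{pq}{2}$$ for some sign $\epsilon\in\{1,-1\}$.
   Context: Let $N=pq$ and $e=(p-1)(q-1)/2$. Let $x$ be the unique element of $\mathbb{Z}_N$ with $x\equiv g\pmod p$ and $x\equiv 1\pmod q$. The Whiteman generalized cyclotomic classes of order 2 are $D_i=\{g^{s}x^{i}\bmod N: s=0,1,\dots,e-1\}$ for $i=0,1$; they partition the unit group $\mathbb{Z}_N^{*}$. For a prime $r\in\{p,q\}$, the classical cyclotomic classes are $D_0^{(r)}=\{g^{2t}\bmod r: 0\le t\le \frac{r-1}{2}-1\}$ and $D_1^{(r)}=\{g^{2t+1}\bmod r: 0\le t\le \frac{r-1}{2}-1\}$. Let $\omega_r=e^{2\pi i/r}$ and $\omega_N=e^{2\pi i/N}$. The Gauss periods are $\delta_j^{r}=\sum_{k\in D_j^{(r)}}\omega_r^{k}$ for $r\in\{p,q\}$, $j=0,1$, and $\eta_j=\sum_{k\in D_j}\omega_N^{k}$ for $j=0,1$. *)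

(* Defs.v *)
From HB Require Import structures.
From mathcomp Require Import all_boot all_order all_algebra.
From mathcomp Require Import complex.
From mathcomp Require Import reals trigo.
Set Implicit Arguments. Unset Strict Implicit. Unset Printing Implicit Defensive.
Import Order.TTheory GRing.Theory Num.Theory.
Local Open Scope ring_scope.
Local Open Scope complex_scope.

Definition prim_root_mod (r g : nat) : Prop :=
  [/\ coprime g r, (g ^ totient r = 1 %[mod r])%N &
      forall k : nat, (0 < k)%N -> (g ^ k = 1 %[mod r])%N -> (totient r <= k)%N].

Definition omega (R : realType) (n : nat) : R[i] :=
  (cos (2 * pi / n%:R))%:C + 'i * (sin (2 * pi / n%:R))%:C.

Definition xW (p q g : nat) : nat := (chinese p q g 1 %% (p * q))%N.

Definition eW (p q : nat) : nat := ((p.-1 * q.-1) %/ 2)%N.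

Definition whiteman (p q g i : nat) : pred nat :=
  fun k => [exists s : 'I_(eW p q), k == (g ^ s * (xW p q g) ^ i) %% (p * q)]%N.

Definition cycl (r g j : nat) : pred nat :=
  fun k => [exists t : 'I_(r.-1 %/ 2), k == g ^ (2 * t + j) %% r]%N.

Definition eta (R : realType) (p q g j : nat) : R[i] :=
  \sum_(0 <= k < p * q | whiteman p q g j k) omega R (p * q) ^+ k.

Definition delta (R : realType) (r g j : nat) : R[i] :=
  \sum_(0 <= k < r | cycl r g j k) omega R r ^+ k.

(* Main.v *)
Require Import Defs.
From mathcomp Require Import all_boot all_order all_algebra.
From mathcomp Require Import complex.
From mathcomp Require Import reals trigo.
From mathcomp Require Import zify ring lra.

Module M_T2.
Unset Implicit Arguments. Set Strict Implicit. Set Printing Implicit Defensive.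
Import Order.TTheory GRing.Theory Num.Theory.
Local Open Scope ring_scope.
Local Open Scope complex_scope.

Section Trig.
Variable R : realType.
Definition cis (x : R) : R[i] := cos x +i* sin x.
Lemma cisD x y : cis (x + y) = cis x * cis y.
Proof.
rewrite /cis cosD sinD.
apply/eqP; rewrite eq_complex /=; apply/andP; split; apply/eqP; ring.
Qed.
Lemma cis0 : cis 0 = 1.
Proof. by rewrite /cis cos0 sin0. Qed.
Lemma omega_cis n : omega R n = cis (2 * pi / n%:R).
Proof.
rewrite /omega /cis; apply/eqP; rewrite eq_complex /=; apply/andP; split; apply/eqP; ring.
Qed.
Lemma cisX x m : cis x ^+ m = cis (m%:R * x).
Proof.
elim: m => [|m IH]; first by rewrite expr0 mul0r cis0.
by rewrite exprS IH -cisD -nat1r mulrDl mul1r.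
Qed.
Lemma omegaX n m : omega R n ^+ m = cis (m%:R * (2 * pi / n%:R)).
Proof. by rewrite omega_cis cisX. Qed.
Lemma omega_n n : (0 < n)%N -> omega R n ^+ n = 1.
Proof.
move=> n0; rewrite omegaX.
have nz : (n%:R : R) != 0 by rewrite pnatr_eq0 -lt0n.
have -> : n%:R * (2 * pi / n%:R) = pi *+ 2 :> R by rewrite -mulr_natr; field.
by rewrite /cis cos2pi sin2pi.
Qed.
Lemma cis_neq1 x : 0 < x < pi *+ 2 -> cis x != 1.
Proof.
move=> /andP[x0 x2]; apply/negP => /eqP/eqP; rewrite eq_complex /= => /andP[/eqP c1 _].
have hs : 0 < sin (x / 2).
  apply: sin_gt0_pi; apply/andP; split; first by rewrite divr_gt0.
  by rewrite ltr_pdivrMr // mulr_natr.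
have xe : x = x / 2 + x / 2 by field.
move: c1; rewrite xe cosD; move: hs; set y := x / 2 => hs h.
have e := cos2Dsin2 y.
have : sin y ^+ 2 = 0.
  have -> : sin y ^+ 2 = ((cos y ^+ 2 + sin y ^+ 2) - (cos y * cos y - sin y * sin y)) / 2 by field.
  by rewrite e h subrr mul0r.
by rewrite expr2; move/eqP; rewrite mulf_eq0 orbb => /eqP hs0; move: hs; rewrite hs0 ltxx.
Qed.
Lemma omega_neq1 n m : (0 < m < n)%N -> omega R n ^+ m != 1.
Proof.
move=> /andP[m0 mn]; rewrite omegaX; apply: cis_neq1.
have n0 : (0 < n%:R :> R) by rewrite ltr0n (ltn_trans m0 mn).
apply/andP; split.
  by rewrite mulr_gt0 ?ltr0n // divr_gt0 // mulr_gt0 // pi_gt0.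
have nz : (n%:R : R) != 0 by rewrite gt_eqF.
have -> : m%:R * (2 * pi / n%:R) = (pi *+ 2) * (m%:R / n%:R) :> R by rewrite -mulr_natr; field.
rewrite gtr_pMr; last by rewrite pmulrn_rgt0 // pi_gt0.
by rewrite ltr_pdivrMr // mul1r ltr_nat.
Qed.
End Trig.

End M_T2.
Import M_T2.

Module M_T3.
Set Implicit Arguments. Unset Strict Implicit. Unset Printing Implicit Defensive.
Import Order.TTheory GRing.Theory Num.Theory.
Local Open Scope ring_scope.

Section Om.
Variable R : realType.
Local Notation w := (omega R).

Lemma omega_mod n k : (0 < n)%N -> w n ^+ k = w n ^+ (k %% n).
Proof.
move=> n0; rewrite {1}(divn_eq k n) exprD mulnC exprM omega_n // expr1n mul1r.
by [].
Qed.

Lemma omega_eqmod n a b : (0 < n)%N -> a = b %[mod n] -> w n ^+ a = w n ^+ b.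
Proof. by move=> n0 e; rewrite (omega_mod a n0) e -omega_mod. Qed.

Lemma sum_omega n m : (0 < n)%N ->
  \sum_(k < n) w n ^+ (m * k) = if (n %| m)%N then n%:R else 0.
Proof.
move=> n0; case: ifP => h.
  rewrite (eq_bigr (fun _ => 1)); first by rewrite sumr_const card_ord.
  move=> k _; rewrite (omega_mod _ n0).
  by move: h; rewrite /dvdn => /eqP h; rewrite -modnMml h mul0n mod0n expr0.
have z1 : w n ^+ m != 1.
  rewrite (omega_mod _ n0); apply: omega_neq1.
  by rewrite ltn_pmod // andbT lt0n; move: h; rewrite /dvdn => /negbT.
have : (w n ^+ m - 1) * \sum_(k < n) w n ^+ (m * k) = 0.
  rewrite (eq_bigr (fun k : 'I_n => (w n ^+ m) ^+ k)); last by move=> k _; rewrite exprM.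
  by rewrite -subrX1 -exprM mulnC exprM omega_n // expr1n subrr.
by move/eqP; rewrite mulf_eq0 subr_eq0 (negbTE z1) /= => /eqP.
Qed.

Lemma omega_sub n m : (0 < n)%N -> (0 < m)%N -> w (n * m) ^+ m = w n.
Proof.
move=> n0 m0; rewrite omegaX omega_cis natrM; congr cis.
have : (n%:R : R) != 0 by rewrite pnatr_eq0 -lt0n.
have : (m%:R : R) != 0 by rewrite pnatr_eq0 -lt0n.
move=> h1 h2; field; by rewrite h1 h2.
Qed.
End Om.

End M_T3.
Import M_T3.

Module M_N1.
Set Implicit Arguments. Unset Strict Implicit. Unset Printing Implicit Defensive.


Lemma mod_cancel r a b c : coprime a r -> a * b = a * c %[mod r] -> b = c %[mod r].
Proof.
move=> co; wlog le: b c / c <= b.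
  move=> H; case: (leqP c b) => [/H//|/ltnW h e]; by symmetry; apply: H.
move/eqP; rewrite eqn_mod_dvd ?leq_mul2l ?le ?orbT // -mulnBr.
by rewrite Gauss_dvdr 1?coprime_sym // => h; apply/eqP; rewrite eqn_mod_dvd.
Qed.
Arguments mod_cancel {r a b c}.

Section PR.
Variables r g : nat.
Hypothesis pr : prime r.
Hypothesis pg : prim_root_mod r g.

Lemma r_gt1 : 1 < r. Proof. exact: prime_gt1. Qed.
Lemma cop_g : coprime g r. Proof. by case: pg. Qed.
Lemma powr1 : g ^ r.-1 = 1 %[mod r].
Proof. by case: pg; rewrite totient_prime. Qed.
Lemma pow_min k : 0 < k -> g ^ k = 1 %[mod r] -> r.-1 <= k.
Proof. by case: pg; rewrite totient_prime // => _ _ H; apply: H. Qed.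

Lemma pow_mod m : g ^ m = g ^ (m %% r.-1) %[mod r].
Proof.
have h : g ^ (m %/ r.-1 * r.-1) = 1 %[mod r].
  by rewrite mulnC expnM -modnXm powr1 modnXm exp1n.
by rewrite {1}(divn_eq m r.-1) expnD -modnMml h modnMml mul1n.
Qed.

Lemma pow_inj a b : a < r.-1 -> b < r.-1 -> g ^ a = g ^ b %[mod r] -> a = b.
Proof.
wlog le: a b / a <= b.
  move=> H ha hb e; case: (leqP a b) => [h|/ltnW h]; first exact: H.
  by symmetry; apply: H.
move=> ha hb e; have : g ^ a * 1 = g ^ a * g ^ (b - a) %[mod r].
  by rewrite muln1 -expnD subnKC.
move/(mod_cancel (coprimeXl a cop_g)) => e1.
case: (posnP (b - a)) => [d0|d0]; first by lia.
have := @pow_min (b - a) d0 (esym e1); lia.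
Qed.

Lemma pow_eq a b : g ^ a = g ^ b %[mod r] -> a = b %[mod r.-1].
Proof.
move=> e; have r1 : 0 < r.-1 by have := r_gt1; lia.
apply: pow_inj; rewrite ?ltn_pmod //.
by rewrite -!pow_mod.
Qed.

Lemma pow_nz m : g ^ m %% r != 0.
Proof.
apply/negP; rewrite -/(dvdn r _) => /(coprime_dvdr) h.
have := h r; rewrite coprime_sym (coprimeXl m cop_g) /coprime gcdnn => /(_ isT)/eqP r1.
by have := r_gt1; rewrite r1.
Qed.

Lemma pow_surj k : k %% r != 0 -> exists m, m < r.-1 /\ g ^ m = k %[mod r].
Proof.
move=> kn0.
have r1 : 0 < r.-1 by have := r_gt1; lia.
have hb m : (g ^ m %% r).-1 < r.-1.
  have := ltn_pmod (g ^ m) (ltnW r_gt1); have := pow_nz m; lia.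
pose f (m : 'I_r.-1) : 'I_r.-1 := Ordinal (hb m).
have fi : injective f.
  move=> x y /(congr1 val) /= h; apply/val_inj/pow_inj; rewrite ?ltn_ord //.
  move: h; have := pow_nz x; have := pow_nz y. lia.
have hk : (k %% r).-1 < r.-1.
  have := ltn_pmod k (ltnW r_gt1); lia.
have /codomP [m hm] := injF_onto fi (Ordinal hk).
exists m; split => //.
move: hm => /(congr1 val) /=; have := pow_nz m; lia.
Qed.
End PR.

End M_N1.
Import M_N1.

Module M_N2.
Set Implicit Arguments. Unset Strict Implicit. Unset Printing Implicit Defensive.
Import GRing.Theory Num.Theory.

Section Chi.
Variables r g : nat.
Hypothesis pr : prime r.
Hypothesis ro : odd r.
Hypothesis pg : prim_root_mod r g.

Lemma rev : odd r.-1 = false.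
Proof. by move: ro; case: (r) => [|n] //=; case: (odd n). Qed.

Lemma cycl_pow m : cycl r g (odd m) (g ^ m %% r).
Proof.
set n := m %% r.-1.
have r1 : (0 < r.-1)%N by have := r_gt1 pr; lia.
have hn : (n < r.-1)%N by rewrite ltn_pmod.
have on : odd n = odd m by rewrite odd_mod // rev.
have e := odd_double_half n; rewrite on in e.
have ht : (n./2 < r.-1 %/ 2)%N.
  have := rev; move: e hn; rewrite -divn2 -muln2; case: (odd m) => /=; lia.
apply/existsP; exists (Ordinal ht) => /=.
apply/eqP; rewrite (pow_mod pr pg) -/n; congr (_ ^ _ %% _).
by rewrite -{1}e -muln2 mulnC addnC.
Qed.

Lemma cycl_inv j k : cycl r g j k -> exists m, k = g ^ m %% r /\ odd m = odd j.
Proof.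
move/existsP => [t /eqP ->]; exists (2 * t + j)%N; split => //.
by rewrite oddD oddM.
Qed.

Lemma cycl_powN m : ~~ cycl r g (~~ odd m) (g ^ m %% r).
Proof.
apply/negP => /cycl_inv [m' [e o]].
have := pow_eq pr pg (esym e) => /(congr1 odd).
rewrite !odd_mod ?rev // o.
by case: (odd m).
Qed.

Definition chi (k : nat) : int :=
  if cycl r g 0 (k %% r) then 1%R else if cycl r g 1 (k %% r) then (-1)%R else 0%R.

Lemma chi_mod k : chi (k %% r) = chi k.
Proof. by rewrite /chi modn_mod. Qed.

Lemma chi_eqmod a b : a = b %[mod r] -> chi a = chi b.
Proof. by move=> e; rewrite -chi_mod e chi_mod. Qed.

Lemma chi_pow m : chi (g ^ m) = ((-1) ^+ m)%R.
Proof.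
rewrite /chi; have := cycl_pow m; have := cycl_powN m.
by rewrite -signr_odd; case: (odd m) => /= /negbTE -> ->.
Qed.

Lemma cycl_nz j k : cycl r g j k -> k %% r != 0%N.
Proof.
move/cycl_inv => [m [-> _]]; rewrite modn_mod; exact: pow_nz pr pg m.
Qed.

Lemma chi0 k : (r %| k)%N -> chi k = 0%R.
Proof.
rewrite /dvdn => /eqP h; rewrite /chi h.
case: ifP => [/cycl_nz|_]; first by rewrite mod0n.
by case: ifP => [/cycl_nz|_]; first by rewrite mod0n.
Qed.

Lemma chi_unit k : ~~ (r %| k)%N -> exists m, chi k = ((-1) ^+ m)%R /\ g ^ m = k %[mod r].
Proof.
move=> h; have [m [_ e]] := pow_surj pr pg h.
by exists m; rewrite -chi_pow (chi_eqmod e).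
Qed.

Lemma chiM a b : chi (a * b) = (chi a * chi b)%R.
Proof.
case: (boolP (r %| a)%N) => ha; first by rewrite (chi0 (dvdn_mulr _ ha)) (chi0 ha) GRing.mul0r.
case: (boolP (r %| b)%N) => hb; first by rewrite (chi0 (dvdn_mull _ hb)) (chi0 hb) GRing.mulr0.
have [m [-> em]] := chi_unit ha; have [m' [-> em']] := chi_unit hb.
rewrite -GRing.exprD -chi_pow; apply: chi_eqmod.
by apply: esym; rewrite expnD -modnMm em em' modnMm.
Qed.

Lemma chi_sq k : ~~ (r %| k)%N -> (chi k ^+ 2 = 1)%R.
Proof.
by move/chi_unit => [m [-> _]]; rewrite -GRing.exprM mulnC GRing.exprM GRing.expr2 GRing.mulrN1 GRing.opprK GRing.expr1n.
Qed.

Lemma chi_g : chi g = (-1)%R.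
Proof. by have := chi_pow 1; rewrite expn1 expr1. Qed.

Lemma chi_m1 : chi r.-1 = ((-1) ^+ (r.-1 %/ 2))%R.
Proof.
have r2 : (2 < r)%N.
  have := r_gt1 pr; move: ro; case: r => [|[|[|n]]] //.
have hr : ~~ (r %| r.-1)%N.
  apply/negP => h; have : (r <= r.-1)%N by apply: dvdn_leq => //; lia. lia.
have hk : (r.-1 %% r != 0)%N by rewrite modn_small //; lia.
have [m [hm e]] := pow_surj pr pg hk.
rewrite -(chi_eqmod e) chi_pow.
have e2 : g ^ (2 * m) = g ^ 0 %[mod r].
  rewrite mulnC expnM -modnXm e modnXm.
  have -> : (r.-1 ^ 2 = (r - 2) * r + 1)%N by rewrite expnS expn1; nia.
  by rewrite modnMDl.
have := pow_eq pr pg e2; rewrite mod0n => /eqP; rewrite -/(dvdn _ _) => hd.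
have mn0 : m != 0%N.
  apply/negP => /eqP m0; move: e; rewrite m0 expn0 modn_small ?modn_small //; lia.
suff -> : m = (r.-1 %/ 2)%N by [].
have := rev; move: hd hm mn0; rewrite /dvdn.
move: (r.-1) => n hd hm mn0 on.
move: hd; rewrite -/(dvdn _ _) => /dvdnP [kk hkk].
have : kk = 1%N.
  case: kk hkk => [|[|kk]] hkk //; first by lia.
  nia.
move=> e1; rewrite e1 mul1n in hkk.
lia.
Qed.
End Chi.

End M_N2.
Import M_N2.

Module M_N3.
Set Implicit Arguments. Unset Strict Implicit. Unset Printing Implicit Defensive.
Import GRing.Theory.

Lemma sum_mulperm (V : nmodType) r u (F : nat -> V) : 0 < r -> coprime u r ->
  (\sum_(k < r) F k = \sum_(k < r) F ((u * k) %% r)%N)%R.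
Proof.
move=> r0 co.
pose h (k : 'I_r) : 'I_r := Ordinal (ltn_pmod (u * k) r0).
have hi : injective h.
  move=> x y /(congr1 val) /= e; apply/val_inj => /=.
  have := mod_cancel co e; rewrite !modn_small //.
by rewrite (reindex_inj hi).
Qed.

Lemma sum_crt (V : nmodType) p q (G : nat -> nat -> V) : 0 < p -> 0 < q -> coprime p q ->
  (\sum_(k < p * q) G (k %% p)%N (k %% q)%N = \sum_(a < p) \sum_(b < q) G a b)%R.
Proof.
move=> p0 q0 co; have pq0 : 0 < p * q by rewrite muln_gt0 p0.
pose h (x : 'I_p * 'I_q) : 'I_(p * q) := Ordinal (ltn_pmod (chinese p q x.1 x.2) pq0).
have hp x : h x %% p = x.1.
  by rewrite /= modn_dvdm ?dvdn_mulr // chinese_modl // modn_small.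
have hq x : h x %% q = x.2.
  by rewrite /= modn_dvdm ?dvdn_mull // chinese_modr // modn_small.
have hi : injective h.
  move=> [x1 x2] [y1 y2] e; have e1 := hp (x1, x2); have e2 := hq (x1, x2).
  rewrite e in e1 e2; rewrite hp in e1; rewrite hq in e2.
  by simpl in e1, e2; congr (_, _); apply: val_inj.
have hb : bijective h.
  by apply: inj_card_bij => //; rewrite card_prod !card_ord.
rewrite pair_bigA /= (reindex h); last exact: onW_bij.
by apply: eq_bigr => x _; rewrite hp hq.
Qed.

End M_N3.
Import M_N3.

Module M_N4.
Set Implicit Arguments. Unset Strict Implicit. Unset Printing Implicit Defensive.
Import GRing.Theory Num.Theory.

Section Wh.
Variables p q g : nat.
Hypotheses (pp : prime p) (pq : prime q) (npq : p != q) (op : odd p) (oq : odd q).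
Hypothesis gcd2 : gcdn p.-1 q.-1 = 2.
Hypotheses (gp : prim_root_mod p g) (gq : prim_root_mod q g).

Local Notation N := (p * q).
Local Notation x := (xW p q g).
Local Notation e := (eW p q).

Lemma co_pq : coprime p q.
Proof. by rewrite prime_coprime // dvdn_prime2. Qed.

Lemma N_gt0 : 0 < N.
Proof. by rewrite muln_gt0 !prime_gt0. Qed.

Lemma x_modp : x = g %[mod p].
Proof. by rewrite /xW modn_dvdm ?dvdn_mulr // chinese_modl // co_pq. Qed.
Lemma x_modq : x = 1 %[mod q].
Proof. by rewrite /xW modn_dvdm ?dvdn_mull // chinese_modr // co_pq. Qed.

Lemma chiX r (pr : prime r) (ro : odd r) (pg : prim_root_mod r g) a n :
  chi r g (a ^ n) = (chi r g a ^+ n)%R.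
Proof.
elim: n => [|n IH]; first by rewrite expn0 expr0 -(expn0 g) (chi_pow pr ro pg) expr0.
by rewrite expnS (chiM pr ro pg) IH exprS.
Qed.

Definition chiN k : int := (chi p g k * chi q g k)%R.

Lemma chi_px : chi p g x = (-1)%R.
Proof. by rewrite (chi_eqmod g x_modp) (chi_g pp op gp). Qed.
Lemma chi_qx : chi q g x = 1%R.
Proof. by rewrite (chi_eqmod g x_modq) -(expn0 g) (chi_pow pq oq gq). Qed.

Lemma chiN_pow s j : chiN (g ^ s * x ^ j) = ((-1) ^+ j)%R.
Proof.
rewrite /chiN (chiM pp op gp) (chiM pq oq gq) (chi_pow pp op gp) (chi_pow pq oq gq).
rewrite (chiX pp op gp) (chiX pq oq gq) chi_px chi_qx expr1n mulr1.
by rewrite mulrAC -exprD addnn -mul2n exprM sqrrN !expr1n mul1r.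
Qed.

Lemma chiN_mod k : chiN (k %% N) = chiN k.
Proof.
rewrite /chiN; congr (_ * _)%R; apply: chi_eqmod; rewrite modn_dvdm //.
  exact: dvdn_mulr.
exact: dvdn_mull.
Qed.

Lemma W_chiN j k : whiteman p q g j k -> chiN k = ((-1) ^+ j)%R.
Proof.
by move/existsP => [s /eqP ->]; rewrite chiN_mod chiN_pow.
Qed.

Lemma chi_nz r (pr : prime r) (ro : odd r) (pg : prim_root_mod r g) k :
  (chi r g k != 0%R) = ~~ (r %| k).
Proof.
case: (boolP (r %| k)) => h; first by rewrite (chi0 pr pg h) eqxx.
have [m [-> _]] := chi_unit pr ro pg h.
by rewrite signr_eq0.
Qed.

Lemma chiN_nz k : (chiN k != 0%R) = coprime k N.
Proof.
rewrite /chiN mulf_eq0 negb_or (chi_nz pp op gp) (chi_nz pq oq gq).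
by rewrite coprimeMr !(coprime_sym k) !prime_coprime.
Qed.
End Wh.

End M_N4.
Import M_N4.

Module M_N5.
Set Implicit Arguments. Unset Strict Implicit. Unset Printing Implicit Defensive.
Import GRing.Theory Num.Theory.

Section Cyc.
Variables r g : nat.
Hypotheses (pr : prime r) (ro : odd r) (pg : prim_root_mod r g).

Lemma cycl_chi k : k < r ->
  ((cycl r g 0 k)%:R - (cycl r g 1 k)%:R = chi r g k :> int)%R /\
  ((cycl r g 0 k)%:R + (cycl r g 1 k)%:R = chi r g k ^+ 2 :> int)%R.
Proof.
move=> kr; rewrite /chi modn_small //.
case: (boolP (cycl r g 0 k)) => h0.
  have [m [km om]] := cycl_inv h0.
  have := cycl_powN pr ro pg m; rewrite om -km /= => /negbTE ->.
  by split.
by case: (boolP (cycl r g 1 k)) => h1 //=.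
Qed.
End Cyc.

Section Wh2.
Variables p q g : nat.
Hypotheses (pp : prime p) (pq : prime q) (npq : p != q) (op : odd p) (oq : odd q).
Hypothesis gcd2 : gcdn p.-1 q.-1 = 2.
Hypotheses (gp : prim_root_mod p g) (gq : prim_root_mod q g).

Local Notation N := (p * q).
Local Notation x := (xW p q g).
Local Notation e := (eW p q).

Lemma co_xN : coprime x N.
Proof.
rewrite coprimeMr -(coprime_modl x p) -(coprime_modl x q) x_modp // x_modq //.
rewrite coprime_modl modn_small ?prime_gt1 // coprime1n andbT.
by case: gp.
Qed.

Lemma two_e : 2 * e = p.-1 * q.-1.
Proof.
have h : 2 %| p.-1.
  by rewrite dvdn2; move: op; case: (p) => [|n] //=; rewrite negbK.
rewrite /eW mulnC divnK //; exact: dvdn_mulr.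
Qed.

Lemma lcm_e : lcmn p.-1 q.-1 = e.
Proof.
have := muln_lcm_gcd p.-1 q.-1; rewrite gcd2 -two_e; lia.
Qed.

Lemma W_inj j s s' : s < e -> s' < e ->
  (g ^ s * x ^ j) %% N = (g ^ s' * x ^ j) %% N -> s = s'.
Proof.
move=> hs hs' eq.
have eN : g ^ s = g ^ s' %[mod N].
  apply: (mod_cancel (coprimeXl j co_xN)); by rewrite mulnC eq mulnC.
have ep : g ^ s = g ^ s' %[mod p].
  by rewrite -(modn_dvdm _ (dvdn_mulr q (dvdnn p))) eN modn_dvdm // dvdn_mulr.
have eq' : g ^ s = g ^ s' %[mod q].
  by rewrite -(modn_dvdm _ (dvdn_mull p (dvdnn q))) eN modn_dvdm // dvdn_mull.
have e1 := pow_eq pp gp ep; have e2 := pow_eq pq gq eq'.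
wlog le : s s' hs hs' e1 e2 {eq eN ep eq'} / s' <= s.
  move=> H; case: (leqP s' s) => [h|/ltnW h]; first exact: H.
  by symmetry; apply: H.
move: e1 e2 => /eqP e1 /eqP e2.
rewrite eqn_mod_dvd // in e1; rewrite eqn_mod_dvd // in e2.
have : lcmn p.-1 q.-1 %| s - s' by rewrite dvdn_lcm e1 e2.
rewrite lcm_e => /dvdnP [k hk].
case: k hk => [|k] hk; first lia.
nia.
Qed.

Definition Wset j : {set 'I_N} := [set k : 'I_N | whiteman p q g j k].
Definition Uset : {set 'I_N} := [set k : 'I_N | coprime k N].

Lemma Wset_card j : e <= #|Wset j|.
Proof.
pose f (s : 'I_e) : 'I_N := Ordinal (ltn_pmod (g ^ s * x ^ j) (N_gt0 pp pq)).
have fi : injective f.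
  by move=> a b /(congr1 val) /= h; apply/val_inj/(W_inj (ltn_ord a) (ltn_ord b) h).
have <- : #|f @: [set: 'I_e]| = e by rewrite card_imset // cardsT card_ord.
apply: subset_leq_card; apply/subsetP => k /imsetP [s _ ->].
rewrite inE; apply/existsP; exists s; by [].
Qed.

Lemma card_Uset : #|Uset| = 2 * e.
Proof.
rewrite two_e -!totient_prime // -totient_coprime ?co_pq //.
rewrite totient_count_coprime -sum1_card big_mkord big_mkcond /=.
apply: eq_bigr => k _; rewrite inE coprime_sym; by case: ifP.
Qed.

Lemma W_sub j : Wset j \subset Uset.
Proof.
apply/subsetP => k; rewrite !inE => /(W_chiN pp pq npq op oq gp gq) h.
by rewrite -(chiN_nz pp pq op oq gp gq) h signr_eq0.
Qed.

Lemma W_disj : Wset 0 :&: Wset 1 = set0.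
Proof.
apply/setP => k; rewrite !inE; apply/negP => /andP [h0 h1].
have := W_chiN pp pq npq op oq gp gq h0; rewrite (W_chiN pp pq npq op oq gp gq h1).
by [].
Qed.

Lemma W_cover : Wset 0 :|: Wset 1 = Uset.
Proof.
apply/eqP; rewrite eqEcard subUset !W_sub /= card_Uset.
have := cardsUI (Wset 0) (Wset 1); rewrite W_disj cards0 addn0 => ->.
have := Wset_card 0; have := Wset_card 1; lia.
Qed.

Lemma W_link k : k < N ->
  ((whiteman p q g 0 k)%:R - (whiteman p q g 1 k)%:R = chiN p q g k :> int)%R /\
  ((whiteman p q g 0 k)%:R + (whiteman p q g 1 k)%:R = chiN p q g k ^+ 2 :> int)%R.
Proof.
move=> kN.
case: (boolP (whiteman p q g 0 k)) => h0.
  have c0 := W_chiN pp pq npq op oq gp gq h0.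
  have -> : whiteman p q g 1 k = false.
    apply/negbTE/negP => h1; have := W_chiN pp pq npq op oq gp gq h1.
    by rewrite c0.
  by rewrite c0.
case: (boolP (whiteman p q g 1 k)) => h1.
  by rewrite (W_chiN pp pq npq op oq gp gq h1).
have -> : chiN p q g k = 0%R.
  apply/eqP; apply: contraNT h1; rewrite (chiN_nz pp pq op oq gp gq) => hc.
  have : Ordinal kN \in Uset by rewrite inE.
  rewrite -W_cover !inE /= (negbTE h0) /=; by [].
by [].
Qed.
End Wh2.

End M_N5.
Import M_N5.

Module M_G1.
Set Implicit Arguments. Unset Strict Implicit. Unset Printing Implicit Defensive.
Import Order.TTheory GRing.Theory Num.Theory.
Local Open Scope ring_scope.

Section Gauss.
Variable R : realType.
Variables r g : nat.
Hypotheses (pr : prime r) (ro : odd r) (pg : prim_root_mod r g).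
Local Notation w := (omega R r).
Local Notation chiC k := ((chi r g k)%:~R : R[i]).

Lemma r0 : (0 < r)%N. Proof. exact: prime_gt0. Qed.

Lemma chi_sum : \sum_(k < r) chi r g k = 0.
Proof.
have co : coprime g r by case: pg.
have := sum_mulperm (fun k => chi r g k) r0 co.
under [X in _ = X -> _]eq_bigr => k _ do rewrite chi_mod (chiM pr ro pg) (chi_g pr ro pg).
rewrite -mulr_sumr mulN1r => /eqP; rewrite -subr_eq0 opprK -mulr2n.
by rewrite -mulr_natr mulf_eq0 pnatr_eq0 orbF => /eqP.
Qed.

Lemma sumsq m : \sum_(a < r) chiC a ^+ 2 * w ^+ (m * a) =
  (if (r %| m)%N then r%:R else 0) - 1.
Proof.
rewrite -(sum_omega R m r0) -(big_mkord xpredT (fun a => chiC a ^+ 2 * w ^+ (m * a))) -(big_mkord xpredT (fun a => w ^+ (m * a))) /=.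
rewrite big_ltn ?r0 // [X in _ = X - _]big_ltn ?r0 //.
rewrite (chi0 pr pg (dvdn0 r)) muln0 expr0 /= expr0n mul0r add0r addrC addKr.
apply: eq_big_nat => a /andP [a1 ar].
rewrite -rmorphXn /= (chi_sq pr ro pg) ?rmorph1 ?mul1r //.
apply/negP => /dvdn_leq; lia.
Qed.

Definition G u := \sum_(a < r) chiC a * w ^+ (u * a).

Lemma G_sq u : ~~ (r %| u)%N -> G u ^+ 2 = chiC r.-1 * r%:R.
Proof.
move=> ru.
have step a : (a < r)%N -> chiC a * w ^+ (u * a) * \sum_(b < r) chiC b * w ^+ (u * b) =
    \sum_(t < r) chiC a ^+ 2 * chiC t * w ^+ (u * a * t.+1).
  move=> ar; case: (boolP (r %| a)%N) => ha.
    rewrite (chi0 pr pg ha) !mul0r big1 // => t _.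
    by rewrite expr0n !mul0r.
  have co : coprime a r by rewrite coprime_sym prime_coprime.
  rewrite (sum_mulperm (fun b => chiC b * w ^+ (u * b)) r0 co) mulr_sumr.
  apply: eq_bigr => t _.
  rewrite chi_mod (chiM pr ro pg) rmorphM /=.
  rewrite (omega_mod R (u * ((a * t) %% r))%N r0) modnMmr -(omega_mod R _ r0).
  have -> : (u * a * t.+1 = u * a + u * (a * t))%N by rewrite mulnS mulnA.
  rewrite exprD; ring.
rewrite expr2 /G mulr_suml.
rewrite (eq_bigr (fun a : 'I_r => \sum_(t < r) chiC a ^+ 2 * chiC t * w ^+ (u * a * t.+1))); last first.
  by move=> a _; rewrite -step.
rewrite exchange_big /=.
rewrite (eq_bigr (fun t : 'I_r => chiC t * ((if (r %| u * t.+1)%N then r%:R else 0) - 1))); last first.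
  move=> t _; rewrite -sumsq mulr_sumr; apply: eq_bigr => a _.
  by rewrite mulrCA mulrA; congr (_ * _ * w ^+ _); lia.
under eq_bigr => t _ do rewrite mulrBr mulr1.
rewrite sumrB.
have -> : \sum_(i < r) chiC i = 0 by rewrite -rmorph_sum /= chi_sum.
rewrite subr0.
have rm1 : (r.-1 < r)%N by rewrite prednK ?r0.
rewrite (bigD1 (Ordinal rm1)) //= big1 ?addr0.
  rewrite prednK ?r0 // Gauss_dvdr ?dvdnn //.
  by rewrite prime_coprime.
move=> t /negbTE ht; case: ifP => [h|]; last by rewrite mulr0.
exfalso; move: h ht; rewrite Gauss_dvdr ?prime_coprime // => h.
have : t.+1 = r.
  apply/eqP; rewrite eqn_leq ltn_ord /=; exact: dvdn_leq h.
move=> e; suff : t = Ordinal rm1 :> 'I_r by move=> ->; rewrite eqxx.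
by apply: val_inj => /=; lia.
Qed.
End Gauss.

End M_G1.
Import M_G1.

Module M_F1.
Set Implicit Arguments. Unset Strict Implicit. Unset Printing Implicit Defensive.
Import Order.TTheory GRing.Theory Num.Theory.
Local Open Scope ring_scope.

Section Delta.
Variable R : realType.
Variables r g : nat.
Hypotheses (pr : prime r) (ro : odd r) (pg : prim_root_mod r g).

Lemma delta_sum j : delta R r g j = \sum_(k < r) ((cycl r g j k)%:R : R[i]) * omega R r ^+ k.
Proof.
rewrite /delta big_mkcond big_mkord; apply: eq_bigr => k _.
by case: ifP => _; rewrite ?mul1r ?mul0r.
Qed.

Lemma delta_diff : delta R r g 0 - delta R r g 1 = G R r g 1.
Proof.
rewrite !delta_sum -sumrB /G; apply: eq_bigr => k _.
rewrite -mulrBl mul1n; congr (_ * _).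
have [h _] := cycl_chi pr ro pg (ltn_ord k).
by rewrite -h rmorphB /= !rmorph_nat.
Qed.

Lemma delta_add : delta R r g 0 + delta R r g 1 = -1.
Proof.
rewrite !delta_sum -big_split /=.
have -> : -1 = (if (r %| 1)%N then r%:R else 0) - 1 :> R[i].
  by rewrite dvdn1 (gtn_eqF (prime_gt1 pr)) sub0r.
rewrite -(sumsq R pr ro pg 1); apply: eq_bigr => k _.
rewrite -mulrDl mul1n; congr (_ * _).
have [_ h] := cycl_chi pr ro pg (ltn_ord k).
by rewrite -rmorphXn -h rmorphD /= !rmorph_nat.
Qed.
End Delta.

End M_F1.
Import M_F1.

Module M_F2.
Set Implicit Arguments. Unset Strict Implicit. Unset Printing Implicit Defensive.
Import Order.TTheory GRing.Theory Num.Theory.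
Local Open Scope ring_scope.

Section Eta.
Variable R : realType.
Variables p q g : nat.
Hypotheses (pp : prime p) (pq : prime q) (npq : p != q) (op : odd p) (oq : odd q).
Hypothesis gcd2 : gcdn p.-1 q.-1 = 2.
Hypotheses (gp : prim_root_mod p g) (gq : prim_root_mod q g).
Local Notation N := (p * q)%N.
Let u0 := (egcdn q p).1.
Let v0 := (egcdn p q).1.

Lemma eta_sum j : eta R p q g j = \sum_(k < N) ((whiteman p q g j k)%:R : R[i]) * omega R N ^+ k.
Proof.
rewrite /eta big_mkcond big_mkord; apply: eq_bigr => k _.
by case: ifP => _; rewrite ?mul1r ?mul0r.
Qed.

Lemma u0_nd : ~~ (p %| u0)%N.
Proof.
have := chinese_modl (co_pq pp pq npq) 1 0; rewrite /chinese -/u0 mul0n addn0 mul1n.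
rewrite (modn_small (prime_gt1 pp)) => h; apply/negP => /dvdnP [k hk].
by move: h; rewrite hk mulnA modnMl.
Qed.

Lemma v0_nd : ~~ (q %| v0)%N.
Proof.
have := chinese_modr (co_pq pp pq npq) 0 1; rewrite /chinese -/v0 mul0n add0n mul1n.
rewrite (modn_small (prime_gt1 pq)) => h; apply/negP => /dvdnP [k hk].
by move: h; rewrite hk mulnA modnMl.
Qed.

Lemma crt_omega (A B : nat -> R[i]) :
  \sum_(k < N) A (k %% p)%N * B (k %% q)%N * omega R N ^+ k =
  (\sum_(a < p) A a * omega R p ^+ (u0 * a)) * (\sum_(b < q) B b * omega R q ^+ (v0 * b)).
Proof.
have p0 := prime_gt0 pp; have q0 := prime_gt0 pq.
have wq : omega R (p * q) ^+ p = omega R q by rewrite mulnC (omega_sub R q0 p0).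
rewrite (eq_bigr (fun k : 'I_N => (A (k %% p)%N * omega R p ^+ (u0 * (k %% p))) *
    (B (k %% q)%N * omega R q ^+ (v0 * (k %% q))))); last first.
  move=> k _.
  rewrite (omega_eqmod R (N_gt0 pp pq) (chinese_mod (co_pq pp pq npq) k)) /chinese -/u0 -/v0.
  have -> : ((k %% p) * q * u0 = q * (u0 * (k %% p)))%N by ring.
  have -> : ((k %% q) * p * v0 = p * (v0 * (k %% q)))%N by ring.
  rewrite exprD !exprM (omega_sub R p0 q0) wq; ring.
rewrite (sum_crt (fun a b => (A a * omega R p ^+ (u0 * a)) * (B b * omega R q ^+ (v0 * b)))) //.
  rewrite mulr_suml; apply: eq_bigr => a _; by rewrite mulr_sumr.
exact: co_pq.
Qed.

Lemma eta_diff : eta R p q g 0 - eta R p q g 1 = G R p g u0 * G R q g v0.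
Proof.
rewrite !eta_sum -sumrB /G -(crt_omega (fun a => (chi p g a)%:~R) (fun b => (chi q g b)%:~R)).
apply: eq_bigr => k _.
rewrite -mulrBl; congr (_ * _).
have [h _] := W_link pp pq npq op oq gcd2 gp gq (ltn_ord k).
rewrite !chi_mod -rmorphM /= -/(chiN p q g k) -h rmorphB /= !rmorph_nat //.
Qed.

Lemma eta_add : eta R p q g 0 + eta R p q g 1 = 1.
Proof.
have e1 := sumsq R pp op gp u0; have e2 := sumsq R pq oq gq v0.
rewrite (negbTE u0_nd) in e1; rewrite (negbTE v0_nd) in e2.
have -> : 1 = ((0 - 1) * (0 - 1) : R[i]) by rewrite sub0r mulrNN mulr1.
rewrite -{1}e1 -e2 -(crt_omega (fun a => (chi p g a)%:~R ^+ 2) (fun b => (chi q g b)%:~R ^+ 2)).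
rewrite !eta_sum -big_split /=; apply: eq_bigr => k _.
rewrite -mulrDl; congr (_ * _).
have [_ h] := W_link pp pq npq op oq gcd2 gp gq (ltn_ord k).
rewrite !chi_mod -!rmorphXn -rmorphM /= -exprMn -/(chiN p q g k) -h rmorphD /= !rmorph_nat //.
Qed.
End Eta.

End M_F2.
Import M_F2.

Unset Implicit Arguments. Set Strict Implicit. Set Printing Implicit Defensive.
Import GRing.Theory Num.Theory.
Local Open Scope ring_scope.

Lemma natC_neq0 (R : realType) n : (0 < n)%N -> (n%:R : R[i]) != 0.
Proof.
move=> n0; rewrite -(rmorph_nat (real_complex R)).
apply/eqP => h; have := congr1 (@complex.Re R) h; rewrite /= => /eqP.
by rewrite pnatr_eq0 => /eqP n00; rewrite n00 in n0.
Qed.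

Lemma solve2 (R : realType) (x y a b : R[i]) : x - y = a -> x + y = b ->
  x = (a + b) / 2 /\ y = (b - a) / 2.
Proof.
move=> h1 h2; have h := natC_neq0 R 2 isT; rewrite -h1 -h2; split; by field.
Qed.

Arguments solve2 {R x y a b}.

Lemma key (R : realType) (A B C eps P d0p d1p d0q d1q e0 e1 : R[i]) :
  C ^+ 2 = - P -> A * B * C = eps * P ->
  d0p - d1p = A -> d0p + d1p = -1 ->
  d0q - d1q = B -> d0q + d1q = -1 ->
  e0 - e1 = C -> e0 + e1 = 1 ->
  e0 ^+ 2 * (d1p * d1q + d0p * d0q) + e1 ^+ 2 * (d1p * d0q + d0p * d1q)
  = (1 - P) / 4 + eps * P / 2.
Proof.
move=> hC hABC hA1 hA2 hB1 hB2 hC1 hC2.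
have h2 := natC_neq0 R 2 isT.
have h4 := natC_neq0 R 4 isT.
have [-> ->] := solve2 hA1 hA2.
have [-> ->] := solve2 hB1 hB2.
have [-> ->] := solve2 hC1 hC2.
rewrite -hABC -[P]opprK -hC.
by field.
Qed.

Theorem lemma2 (R : realType) (p q g : nat) :
  prime p -> prime q -> p != q -> odd p -> odd q ->
  (p %% 4 = 1)%N -> (q %% 4 = 3)%N -> gcdn p.-1 q.-1 = 2%N ->
  prim_root_mod p g -> prim_root_mod q g ->
  exists eps : R[i], (eps = 1 \/ eps = -1) /\
    (eta R p q g 0) ^+ 2 * (delta R p g 1 * delta R q g 1 + delta R p g 0 * delta R q g 0)
    + (eta R p q g 1) ^+ 2 * (delta R p g 1 * delta R q g 0 + delta R p g 0 * delta R q g 1)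
    = (1 - (p * q)%:R) / 4 + eps * (p * q)%:R / 2.
Proof.
move=> pp pq npq op oq p4 q4 gcd2 gp gq.
set u0 := (egcdn q p).1; set v0 := (egcdn p q).1.
set A := G R p g 1; set B := G R q g 1; set C := G R p g u0 * G R q g v0.
have nd1 r : prime r -> ~~ (r %| 1)%N by move=> pr; rewrite dvdn1 (gtn_eqF (prime_gt1 pr)).
have hp1 : (p.-1 %/ 2 %% 2 = 0)%N by lia.
have hq1 : (q.-1 %/ 2 %% 2 = 1)%N by lia.
have sp : chi p g p.-1 = 1 by rewrite (chi_m1 pp op gp) -signr_odd -modn2 hp1.
have sq : chi q g q.-1 = -1 by rewrite (chi_m1 pq oq gq) -signr_odd -modn2 hq1.
have hA : A ^+ 2 = p%:R.
  by rewrite /A (G_sq R pp op gp (nd1 _ pp)) sp mul1r.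
have hB : B ^+ 2 = - q%:R.
  by rewrite /B (G_sq R pq oq gq (nd1 _ pq)) sq rmorphN1 mulN1r.
have hC : C ^+ 2 = - (p * q)%:R.
  rewrite /C exprMn (G_sq R pp op gp (u0_nd pp pq npq)) (G_sq R pq oq gq (v0_nd pp pq npq)).
  by rewrite sp sq rmorphN1 mul1r mulN1r natrM mulrN.
have dA : delta R p g 0 - delta R p g 1 = A by exact: delta_diff.
have dB : delta R q g 0 - delta R q g 1 = B by exact: delta_diff.
have eD : eta R p q g 0 - eta R p q g 1 = C by exact: eta_diff.
have sA := delta_add R pp op gp; have sB := delta_add R pq oq gq.
have sC := eta_add R pp pq npq op oq gcd2 gp gq.
clearbody A B C.
have hABC : (A * B * C) ^+ 2 = ((p * q)%:R) ^+ 2.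
  by rewrite !exprMn hA hB hC natrM; ring.
have : (A * B * C - (p * q)%:R) * (A * B * C + (p * q)%:R) = 0.
  by rewrite -subr_sqr hABC subrr.
move/eqP; rewrite mulf_eq0 => /orP [/eqP h|/eqP h].
  exists 1; split; first by left.
  apply: key hC _ dA sA dB sB eD sC.
  by move/eqP: h; rewrite subr_eq0 mul1r => /eqP.
exists (-1); split; first by right.
apply: key hC _ dA sA dB sB eD sC.
by move/eqP: h; rewrite addr_eq0 mulN1r => /eqP.
Qed.
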